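(* For every $\delta>0$ and every finite set $A=\{a_1,\dots,a_m\}\subset\mathbb{R}^n$ there is $p_0(A,\delta)$ such that for every prime $p\ge p_0(A,\delta)$ there exist $N\ge n$ and a Euclidean sub-$p$-toral set $S=\{s_1,\dots,s_m\}\subset\mathbb{R}^N$ with $|a_i-s_i|<\delta$ for all $i$, where $\mathbb{R}^n\subset\mathbb{R}^N$ via the standard inclusion.
   Context: A $p$-torus is a group isomorphic to $(\mathbb{Z}_p)^\alpha$ for some $\alpha\ge1$. A set $X\subset\mathbb{R}^k$ is Euclidean sub-$p$-toral if there exist $n\ge k$, a $p$-torus $G$ and an action of $G$ on $\mathbb{R}^n$ by isometries such that $X$ (viewed in $\mathbb{R}^n$ via the standard inclusion $\mathbb{R}^k\subset\mathbb{R}^n$) is contained in a single $G$-orbit. *)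

(* Defs.v *)
From HB Require Import structures.
From mathcomp Require Import all_boot all_order all_algebra.
From mathcomp Require Import reals.
Set Implicit Arguments. Unset Strict Implicit. Unset Printing Implicit Defensive.
Import Order.TTheory GRing.Theory Num.Theory.
Local Open Scope ring_scope.

Definition edist (R : realType) (n : nat) (x y : 'rV[R]_n) : R :=
  Num.sqrt (\sum_(i < n) (x 0 i - y 0 i) ^+ 2).

Definition std_incl (R : realType) (n k : nat) (x : 'rV[R]_n) : 'rV[R]_(n + k) :=
  row_mx x 0.

Definition isometric_ptorus_action (R : realType) (p alpha n : nat)
    (act : 'rV['Z_p]_alpha -> 'rV[R]_n -> 'rV[R]_n) : Prop :=
  [/\ (forall x, act 0 x = x),
      (forall g h x, act (g + h) x = act g (act h x)) &
      (forall g x y, edist (act g x) (act g y) = edist x y)].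

Definition sub_p_toral (R : realType) (p k : nat) (X : 'rV[R]_k -> Prop) : Prop :=
  exists (k' alpha : nat) (act : 'rV['Z_p]_alpha -> 'rV[R]_(k + k') -> 'rV[R]_(k + k')),
    (0 < alpha)%N /\ isometric_ptorus_action act /\
    exists x0 : 'rV[R]_(k + k'),
      forall x, X x -> exists g, act g x0 = std_incl k' x.

(* Main.v *)
Require Import Defs.
From HB Require Import structures.
From mathcomp Require Import all_boot all_order all_algebra archimedean.
From mathcomp Require Import reals.
From mathcomp Require Import boolp classical_sets functions ereal topology normedtype derive realfun trigo.
From mathcomp Require Import ring lra.
Require Import Defs.
Import Order.TTheory GRing.Theory Num.Theory Num.Def.
Import numFieldNormedType.Exports.
Local Open Scope ring_scope.

Lemma lip_gen (R : realType) (f df : R -> R) :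
  (forall x : R, is_derive x (1:R) f (df x)) -> (forall x, `|df x| <= 1) ->
  forall x y, `|f x - f y| <= `|x - y|.
Proof.
move=> fd dfb.
have H : forall a b, a <= b -> `|f b - f a| <= `|b - a|.
  move=> a b ab.
  have [c _ ->] := MVT_segment ab (fun x _ => fd x)
    (continuous_subspaceT (fun x => differentiable_continuous
       (proj1 (derivable1_diffP f x) (@ex_derive _ _ _ _ _ _ _ (fd x))))).
  rewrite normrM -[X in _ <= X]mul1r ler_wpM2r //.
move=> x y; have [xy|yx] := leP x y.
  by rewrite distrC [`|x - y|]distrC; apply: H.
by apply: H; apply: ltW.
Qed.

Lemma lip_sin (R : realType) (x y : R) : `|sin x - sin y| <= `|x - y|.
Proof. by apply: (@lip_gen R sin cos) => // z; apply: cos_max. Qed.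
Lemma lip_cos (R : realType) (x y : R) : `|cos x - cos y| <= `|x - y|.
Proof. by apply: (@lip_gen R cos (fun z => - sin z)) => // z; rewrite normrN sin_max. Qed.

Definition ang (R : realType) (P g : nat) : R := pi *+ 2 * g%:R / P%:R.

Lemma sqrt_ge_id (R : realType) (y : R) : 0 <= y <= 1 -> y <= Num.sqrt y.
Proof.
move=> /andP[y0 y1].
have h : y ^+ 2 <= y by rewrite expr2 ler_piMl.
by rewrite -{1}(ger0_norm y0) -sqrtr_sqr ler_sqrt // sqr_ge0.
Qed.

Lemma fe_aux (F : realFieldType) (a r : F) : r != 0 -> r * (a / r) ^+ 2 = a ^+ 2 / r.
Proof. by move=> rn; field. Qed.

Lemma approx (R : realType) (r eps : R) (P : nat) (a : R) :
  0 < r -> 0 < eps -> `|a| <= r -> (0 < P)%N -> a ^+ 2 <= r * eps / 2 ->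
  pi *+ 2 * r / P%:R <= eps / 2 ->
  exists g : nat, (g < P)%N /\ `|a - r * sin (ang R P g)| <= eps /\
     `|r * (cos (ang R P g) - 1)| <= eps.
Proof.
move=> r0 e0 ar P0 ae pe.
have Pr : (0 : R) < P%:R by rewrite ltr0n.
have pi0 : (0 : R) < pi *+ 2 by rewrite pmulrn_rgt0 // pi_gt0.
set x := a / r.
have x1 : -1 <= x <= 1.
  by rewrite -ler_norml /x normrM normfV (gtr0_norm r0) ler_pdivrMr // mul1r.
have [t0 [t0lo [t0hi [st0 ct0]]]] : exists t0 : R, - (pi / 2) <= t0 /\ t0 <= pi / 2 /\
    sin t0 = x /\ cos t0 = Num.sqrt (1 - x ^+ 2).
  exists (asin x); split; first exact: asin_geNpi2.
  split; first exact: asin_lepi2.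
  by split; [rewrite asinK // inE | rewrite cos_asin].
pose t := if 0 <= t0 then t0 else t0 + pi *+ 2.
have st : sin t = x by rewrite /t; case: ifP => _; rewrite ?sinD2pi.
have ct : cos t = Num.sqrt (1 - x ^+ 2).
  by rewrite /t; case: ifP => _; rewrite ?cosD2pi.
have pih := pihalf_lt2 R.
have pi2 := pi_ge2 R.
have t0' : 0 <= t < pi *+ 2.
  rewrite /t; case: ifPn => h.
    rewrite h /=; apply: (le_lt_trans t0hi); lra.
  rewrite -ltNge in h; apply/andP; split; lra.
case/andP: t0' => tge0 tlt.
set y := t * P%:R / (pi *+ 2).
have y0 : 0 <= y by rewrite /y divr_ge0 // ?mulr_ge0 // ltW.
have [gle glt] := andP (truncn_itv y0).
set g := Num.truncn y.
exists g; split.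
  rewrite truncn_lt_nat // /y ltr_pdivrMr // mulrC ltr_pM2l //.
have th1 : ang R P g <= t.
  rewrite /ang ler_pdivrMr //; move: gle; rewrite /y ler_pdivlMr //.
  by rewrite mulrC.
have glt' : t * P%:R < (g%:R + 1) * (pi *+ 2).
  by move: glt; rewrite /y ltr_pdivrMr // -natr1.
have th2 : t - pi *+ 2 / P%:R <= ang R P g.
  rewrite -(ler_pM2r Pr) mulrBl /ang !divfK ?gt_eqF //.
  by move: glt'; rewrite mulrDl mul1r; lra.
have dlt : `|t - ang R P g| <= pi *+ 2 / P%:R.
  by rewrite ger0_norm ?subr_ge0 //; lra.
have rd : r * `|t - ang R P g| <= eps / 2.
  apply: le_trans pe; rewrite -mulrA [_ * (r / _)]mulrC -mulrA ler_pM2l //.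
  by rewrite mulrC.
split.
  have -> : a = r * sin t by rewrite st /x mulrC divfK // gt_eqF.
  rewrite -mulrBr normrM (gtr0_norm r0).
  apply: le_trans (_ : r * `|t - ang R P g| <= _); last by lra.
  by rewrite ler_pM2l // lip_sin.
have x2 : x ^+ 2 <= 1.
  by case/andP: x1 => ha hb; nra.
have c1 : 1 - x ^+ 2 <= cos t.
  by rewrite ct sqrt_ge_id // subr_ge0 x2 /= lerBlDr lerDl sqr_ge0.
have rx : r * x ^+ 2 <= eps / 2.
  have -> : r * x ^+ 2 = a ^+ 2 / r.
    by rewrite /x; apply: (@fe_aux R); rewrite gt_eqF.
  by rewrite ler_pdivrMr //; lra.
have hc : r * `|cos (ang R P g) - cos t| <= eps / 2.
  by apply: le_trans rd; rewrite ler_pM2l // distrC lip_cos.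
have hn := ler_normD (cos (ang R P g) - cos t) (cos t - 1).
rewrite addrA subrK in hn.
rewrite normrM gtr0_norm //.
have h1 : r * (1 - cos t) <= r * x ^+ 2 by rewrite ler_pM2l //; lra.
have e1 : `|cos t - 1| = 1 - cos t by rewrite ler0_norm ?opprB // subr_le0 cos_le1.
rewrite e1 in hn.
apply: le_trans (_ : r * (`|cos (ang R P g) - cos t| + (1 - cos t)) <= _).
  by rewrite ler_pM2l.
rewrite mulrDr; lra.
Qed.

Definition thZ (R : realType) {p : nat} (z : 'Z_p) : R := ang R (Zp_trunc p).+2 z.

Lemma thZ0 (R : realType) p : thZ R (0%R : 'Z_p) = 0.
Proof. by rewrite /thZ /ang (_ : nat_of_ord (0%R : 'Z_p) = 0%N) // mulr0 mul0r. Qed.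

Lemma thZD (R : realType) p (x y : 'Z_p) :
  thZ R x + thZ R y = thZ R (x + y) + pi *+ 2 *+ ((x + y) %/ (Zp_trunc p).+2)%N.
Proof.
rewrite /thZ /ang /=.
set P := (Zp_trunc p).+2.
have Pn : (P%:R : R) != 0 by rewrite pnatr_eq0.
have e : ((x : nat) + y)%:R = (((x + y) %% P)%N%:R : R) + ((x + y) %/ P)%N%:R * P%:R.
  by rewrite {1}(divn_eq (x + y) P) natrD natrM addrC.
rewrite -mulrDl -mulrDr -natrD e -mulr_natr.
by field.
Qed.

Lemma cosZ (R : realType) p (x y : 'Z_p) :
  cos (thZ R (x + y)) = cos (thZ R x + thZ R y).
Proof. by rewrite thZD (periodicn (@cosD2pi R)). Qed.

Lemma sinZ (R : realType) p (x y : 'Z_p) :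
  sin (thZ R (x + y)) = sin (thZ R x + thZ R y).
Proof. by rewrite thZD (periodicn (@sinD2pi R)). Qed.

Lemma rot_id (F : realFieldType) (c s u u' v v' r : F) : c ^+ 2 + s ^+ 2 = 1 ->
  ((c * u + s * (v + r)) - (c * u' + s * (v' + r))) ^+ 2 +
  ((- (s * u) + c * (v + r) - r) - (- (s * u') + c * (v' + r) - r)) ^+ 2 =
  (u - u') ^+ 2 + (v - v') ^+ 2.
Proof.
move=> h.
transitivity ((c ^+ 2 + s ^+ 2) * ((u - u') ^+ 2 + (v - v') ^+ 2)); first by ring.
by rewrite h mul1r.
Qed.

Section Act.
Variables (R : realType) (p n : nat) (r : R).

Definition th (g : 'rV['Z_p]_(n + 1)) (j : 'I_n) : R := thZ R (g 0 (lshift 1 j)).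

Definition rot (g : 'rV['Z_p]_(n + 1)) (x : 'rV[R]_(n + n)) : 'rV[R]_(n + n) :=
  row_mx (\row_j (cos (th g j) * lsubmx x 0 j + sin (th g j) * (rsubmx x 0 j + r)))
         (\row_j (- (sin (th g j) * lsubmx x 0 j) + cos (th g j) * (rsubmx x 0 j + r) - r)).

Lemma rot0 x : rot 0 x = x.
Proof.
rewrite -[RHS]hsubmxK /rot; congr row_mx; apply/rowP => j; rewrite !mxE /th mxE thZ0 cos0 sin0; ring.
Qed.

Lemma rotD g h x : rot (g + h) x = rot g (rot h x).
Proof.
rewrite /rot row_mxKl row_mxKr; congr row_mx; apply/rowP => j; rewrite !mxE /th mxE
  cosZ sinZ cosD sinD; ring.
Qed.

Lemma rot_iso g x y : edist (rot g x) (rot g y) = edist x y.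
Proof.
rewrite /edist !big_split_ord /= -!big_split /=; congr Num.sqrt; apply: eq_bigr => j _.
rewrite !row_mxEl !row_mxEr !mxE; apply: rot_id; exact: cos2Dsin2.
Qed.

End Act.


Lemma edist_row0 (R : realType) m k (A B : 'rV[R]_m) :
  edist (row_mx A (0 : 'rV_k)) (row_mx B 0) = edist A B.
Proof.
rewrite /edist big_split_ord /= [X in _ + X]big1 ?addr0.
  by congr Num.sqrt; apply: eq_bigr => j _; rewrite !row_mxEl.
by move=> i _; rewrite !row_mxEr mxE subrr expr0n.
Qed.

Definition act' (R : realType) p n (r : R) (g : 'rV['Z_p]_(n + 1)) (x : 'rV[R]_(n + n + 0)) :
  'rV[R]_(n + n + 0) := row_mx (@rot R p n r g (lsubmx x)) (0 : 'rV_0).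

Lemma act'_ok (R : realType) p n (r : R) : isometric_ptorus_action (@act' R p n r).
Proof.
have hx : forall x : 'rV[R]_(n + n + 0), x = row_mx (lsubmx x) 0.
  by move=> x; rewrite -[LHS]hsubmxK; congr row_mx; apply: thinmx0.
split.
- by move=> x; rewrite /act' rot0 -hx.
- by move=> g h x; rewrite /act' row_mxKl rotD.
- by move=> g x y; rewrite /act' edist_row0 rot_iso [in RHS](hx x) [in RHS](hx y) edist_row0.
Qed.

Theorem theorem5 (R : realType) (n : nat) (delta : R) (hdelta : 0 < delta)
    (m : nat) (a : 'I_m -> 'rV[R]_n) :
  exists p0 : nat, forall p : nat, prime p -> (p0 <= p)%N ->
    exists (k : nat) (s : 'I_m -> 'rV[R]_(n + k)),
      sub_p_toral p (fun y => exists i, y = s i) /\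
      (forall i, edist (std_incl k (a i)) (s i) < delta).
Proof.
pose eps := delta / (n + n + 1)%:R.
have e0 : 0 < eps by rewrite divr_gt0 // ltr0n addn1.
pose M := \sum_i \sum_j `|a i 0 j|.
have M0 : 0 <= M by apply: sumr_ge0 => i _; apply: sumr_ge0.
have aM : forall i j, `|a i 0 j| <= M.
  move=> i j; rewrite /M (bigD1 i) //= (bigD1 j) //= -addrA lerDl.
  by rewrite addr_ge0 // sumr_ge0 // => *; apply: sumr_ge0.
pose r := M + 1 + M ^+ 2 * 2 / eps.
have r0 : 0 < r.
  rewrite /r; have : 0 <= M ^+ 2 * 2 / eps by rewrite divr_ge0 ?mulr_ge0 ?sqr_ge0 // ltW.
  lra.
exists (Num.truncn (pi *+ 2 * r / (eps / 2))).+1.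
move=> p pp hp.
have Pe : (Zp_trunc p).+2 = p := Zp_cast (prime_gt1 pp).
have hc : pi *+ 2 * r / (eps / 2) < p%:R.
  by apply: lt_le_trans (truncnS_gt _) _; rewrite ler_nat.
have e2 : 0 < eps / 2 by rewrite divr_gt0.
have hP : pi *+ 2 * r / ((Zp_trunc p).+2)%:R <= eps / 2.
  rewrite Pe ler_pdivrMr ?ltr0n ?prime_gt0 //; move: hc; rewrite ltr_pdivrMr //; lra.
have rM : M <= r.
  rewrite /r; have : 0 <= M ^+ 2 * 2 / eps by rewrite divr_ge0 ?mulr_ge0 ?sqr_ge0 // ltW.
  lra.
have M2 : M ^+ 2 <= r * eps / 2.
  have -> : M ^+ 2 = (M ^+ 2 * 2 / eps) * eps / 2 by field; rewrite gt_eqF.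
  rewrite ler_pM2r ?invr_gt0 // ler_pM2r //; rewrite /r; lra.
have key : forall ij : 'I_m * 'I_n, exists z : 'Z_p,
    `|a ij.1 0 ij.2 - r * sin (thZ R z)| <= eps /\ `|r * (cos (thZ R z) - 1)| <= eps.
  move=> [i j] /=.
  have aa : a i 0 j ^+ 2 <= r * eps / 2.
    apply: le_trans M2; have := aM i j; rewrite ler_norml => /andP[h1 h2]; nra.
  have [g [gP [h1 h2]]] := @approx R r eps (Zp_trunc p).+2 (a i 0 j) r0 e0
    (le_trans (aM i j) rM) isT aa hP.
  by exists (Ordinal gP).
case: (choice key) => G HG.
pose gi i : 'rV['Z_p]_(n + 1) := row_mx (\row_j G (i, j)) 0.
exists n, (fun i => @rot R p n r (gi i) 0); split.
  exists 0%N, (n + 1)%N, (@act' R p n r); split; first by rewrite addn1.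
  split; first exact: act'_ok.
  exists 0 => _ [i ->]; exists (gi i).
  rewrite /act' /std_incl (_ : lsubmx 0 = 0) //.
  by apply/rowP => j; rewrite !mxE.
move=> i.
have thG j : @th R p n (gi i) j = thZ R (G (i, j)) by rewrite /th row_mxEl mxE.
have sq : forall x y : R, `|x| <= eps -> y ^+ 2 = x ^+ 2 -> y ^+ 2 <= eps ^+ 2.
  by move=> x y; rewrite ler_norml => /andP[h1 h2] ->; nra.
rewrite /edist /std_incl big_split_ord /=.
rewrite -(ger0_norm (ltW hdelta)) -sqrtr_sqr ltr_sqrt ?exprn_gt0 //.
apply: (le_lt_trans (y := eps ^+ 2 *+ n + eps ^+ 2 *+ n)).
  apply: lerD; rewrite -[X in _ <= _ *+ X](card_ord n) -sumr_const;
    apply: ler_sum => j _; rewrite ?row_mxEl ?row_mxEr !mxE thG;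
    have [h1 h2] := HG (i, j).
    by apply: (sq _ _ h1); rewrite /=; ring.
  by apply: (sq _ _ h2); rewrite /=; ring.
rewrite -mulrnDr -mulr_natr /eps expr_div_n mulrAC ltr_pdivrMr ?exprn_gt0 ?ltr0n ?addn1 //.
rewrite ltr_pM2l ?exprn_gt0 // natrD.
have : (0 : R) <= (n + n)%:R by rewrite ler0n.
set N := (n + n)%:R; nra.
Qed.
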